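(* Let $\{f_i\}_{i\in\mathbb N}$ be an orthonormal set in a Hilbert space and let $\{\alpha_i\}_{i\in\mathbb N}$ be a sequence in $[0,1]$. Set $\tilde e_1=f_1$ and define inductively for $i\in\mathbb N$ \[ e_i=\sqrt{\alpha_i}\,\tilde e_i+\sqrt{1-\alpha_i}\,f_{i+1},\qquad\tilde e_{i+1}=\sqrt{1-\alpha_i}\,\tilde e_i-\sqrt{\alpha_i}\,f_{i+1}. \] If $\prod_{i=n}^\infty(1-\alpha_i)=0$ for each $n\in\mathbb N$, then $\{e_i\}_{i\in\mathbb N}$ is an orthonormal basis of $\overline{\operatorname{span}}\{f_i\}_{i\in\mathbb N}$, and each $e_k$ lies in the (algebraic) linear span of $\{f_i\}_{i\in\mathbb N}$. In particular, if $\alpha_i<1$ for all $i$ and $\sum_{i=1}^\infty\frac{\alpha_i}{1-\alpha_i}=\infty$, then $\{e_i\}_{i\in\mathbb N}$ is an orthonormal basis of $\overline{\operatorname{span}}\{f_i\}_{i\in\mathbb N}$.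
   Context: $\overline{\operatorname{span}}$ is the closed linear span. *)

(* Defs.v *)
From HB Require Import structures.
From mathcomp Require Import all_boot all_order all_algebra.
From mathcomp Require Export complex.
From mathcomp Require Import all_classical all_reals all_analysis.
Import Order.TTheory GRing.Theory Num.Theory.
Import numFieldNormedType.Exports.
Local Open Scope ring_scope.
Local Open Scope classical_set_scope.

Set Implicit Arguments.
Unset Strict Implicit.
Unset Printing Implicit Defensive.

(* A (complex) inner product on a normed space V over C = R[i] whose norm
   is induced by it: linear in the first argument, conjugate symmetric, and
   <x, x> = |x|^2.  A Hilbert space is then a completeNormedModType R[i]
   equipped with such an inner product. *)
Definition inner_product (R : realType) (V : normedModType R[i])
    (ip : V -> V -> R[i]) : Prop :=
  [/\ forall (a : R[i]) (x y z : V), ip (a *: x + y) z = a * ip x z + ip y z,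
      forall x y : V, ip y x = (ip x y)^*
    & forall x : V, ip x x = `|x| ^+ 2].

Definition orthonormal_family (R : realType) (V : normedModType R[i])
    (ip : V -> V -> R[i]) (u : nat -> V) : Prop :=
  forall i j : nat, ip (u i) (u j) = (i == j)%:R.

Definition lin_span (R : realType) (V : normedModType R[i]) (u : nat -> V)
  : set V :=
  [set x | exists (n : nat) (c : nat -> R[i]), x = \sum_(i < n) c i *: u i].

Definition closed_span (R : realType) (V : normedModType R[i]) (u : nat -> V)
  : set V := closure (lin_span u).

Definition is_ONB_of (R : realType) (V : normedModType R[i])
    (ip : V -> V -> R[i]) (u : nat -> V) (M : set V) : Prop :=
  orthonormal_family ip u /\ closed_span u = M.

(* Main.v *)
Require Import Defs.
From HB Require Import structures.
From mathcomp Require Import all_boot all_order all_algebra.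
From mathcomp Require Import complex.
From mathcomp Require Import all_classical all_reals all_analysis.
From mathcomp Require Import ring lra.
Import Order.TTheory GRing.Theory Num.Theory.
Import numFieldNormedType.Exports.
Local Open Scope ring_scope.
Local Open Scope classical_set_scope.
Lemma pad_sum (R : realType) (V : normedModType R[i]) (u : nat -> V)
  (c : nat -> R[i]) (n1 n : nat) : (n1 <= n)%N ->
  \sum_(i < n1) c i *: u i = \sum_(i < n) (if (i < n1)%N then c i else 0) *: u i.
Proof.
move=> h; rewrite (big_ord_widen n (fun i => c i *: u i)) // big_mkcond.
by apply: eq_bigr => i _; case: ifP; rewrite ?scale0r.
Qed.

Lemma lin_span0 (R : realType) (V : normedModType R[i]) (u : nat -> V) :
  lin_span u 0.
Proof. by exists 0%N, (fun=> 0); rewrite big_ord0. Qed.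

Lemma lin_spanD (R : realType) (V : normedModType R[i]) (u : nat -> V) x y :
  lin_span u x -> lin_span u y -> lin_span u (x + y).
Proof.
move=> [n1 [c1 ->]] [n2 [c2 ->]].
exists (n1 + n2)%N, (fun i => (if (i < n1)%N then c1 i else 0) +
                               (if (i < n2)%N then c2 i else 0)).
rewrite (@pad_sum _ _ u c1 _ _ (leq_addr n2 n1)) (@pad_sum _ _ u c2 _ _ (leq_addl n1 n2)).
by rewrite -big_split; apply: eq_bigr => i _; rewrite scalerDl.
Qed.

Lemma lin_spanZ (R : realType) (V : normedModType R[i]) (u : nat -> V) k x :
  lin_span u x -> lin_span u (k *: x).
Proof.
move=> [n [c ->]]; exists n, (fun i => k * c i).
by rewrite scaler_sumr; apply: eq_bigr => i _; rewrite scalerA.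
Qed.

Lemma lin_span_u (R : realType) (V : normedModType R[i]) (u : nat -> V) k :
  lin_span u (u k).
Proof.
exists k.+1, (fun i => (i == k)%:R).
rewrite big_ord_recr /= eqxx scale1r big1 ?add0r // => i _.
by rewrite ltn_eqF // scale0r.
Qed.

Lemma lin_span_sub (R : realType) (V : normedModType R[i]) (u v : nat -> V) x :
  (forall k, lin_span v (u k)) -> lin_span u x -> lin_span v x.
Proof.
move=> H [n [c ->]]; elim: n => [|n IH]; first by rewrite big_ord0; exact: lin_span0.
by rewrite big_ord_recr /=; apply: lin_spanD => //; apply: lin_spanZ.
Qed.

Lemma lin_spanB (R : realType) (V : normedModType R[i]) (u : nat -> V) x y :
  lin_span u x -> lin_span u y -> lin_span u (x - y).
Proof. by move=> hx hy; apply: lin_spanD => //; rewrite -scaleN1r; apply: lin_spanZ. Qed.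

Lemma shuffle5 (V : zmodType) (p q r s t : V) :
  p + (q + r) + (s + t) = p + q + s + (r + t).
Proof. by rewrite [p + (q + r)]addrA addrACA. Qed.
Set Implicit Arguments.
Unset Strict Implicit.

Lemma conjR (R : realType) (k : R) : Num.conj (k%:C%C : R[i]) = k%:C%C.
Proof. exact: conjc_real. Qed.

Section IP.
Context (R : realType) (V : normedModType R[i]) (ip : V -> V -> R[i]).
Hypothesis hip : inner_product ip.

Lemma ipDl x y z : ip (x + y) z = ip x z + ip y z.
Proof. by case: hip => hl _ _; have := hl 1 x y z; rewrite scale1r mul1r. Qed.
Lemma ipZl k x z : ip (k *: x) z = k * ip x z.
Proof.
case: hip => hl _ _; have := hl k x 0 z; rewrite addr0 => ->.
have h0 : ip 0 z = 0.
  have e : ip 0 z + ip 0 z = ip 0 z + 0 by rewrite addr0 -ipDl addr0.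
  exact: (addrI _ e).
by rewrite h0 addr0.
Qed.
Lemma ipNl x z : ip (- x) z = - ip x z.
Proof. by rewrite -scaleN1r ipZl mulN1r. Qed.
Lemma ipBl x y z : ip (x - y) z = ip x z - ip y z.
Proof. by rewrite ipDl ipNl. Qed.
Lemma ipDr x y z : ip z (x + y) = ip z x + ip z y.
Proof. by case: hip => _ hc _; rewrite hc (hc x z) (hc y z) ipDl rmorphD. Qed.
Lemma ipZr (k : R) x z : ip z (k%:C%C *: x) = k%:C%C * ip z x.
Proof. case: hip => _ hc _; rewrite hc (hc x z) ipZl rmorphM; congr (_ * _); exact: conjc_real. Qed.
Lemma ipNr x z : ip z (- x) = - ip z x.
Proof. by case: hip => _ hc _; rewrite hc (hc x z) ipNl rmorphN. Qed.
Lemma ipBr x y z : ip z (x - y) = ip z x - ip z y.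
Proof. by rewrite ipDr ipNr. Qed.
Lemma ip_sym0 x y : ip x y = 0 -> ip y x = 0.
Proof. by case: hip => _ hc _ h; rewrite hc h rmorph0. Qed.
Lemma ip_norm1 x : ip x x = 1 -> `|x| = 1.
Proof.
case: hip => _ _ hn; rewrite hn => /eqP; rewrite pexpr_eq1 //; exact/eqP.
Qed.
End IP.
Section Main.
Context (R : realType) (V : normedModType R[i]) (ip : V -> V -> R[i])
  (f : nat -> V) (a : nat -> R) (e et : nat -> V).
Hypothesis hip : inner_product ip.
Hypothesis hf : orthonormal_family ip f.
Hypothesis ha : forall i, 0 <= a i <= 1.
Hypothesis het0 : et 0%N = f 0%N.
Hypothesis he : forall i, e i = (Num.sqrt (a i))%:C%C *: et i
                   + (Num.sqrt (1 - a i))%:C%C *: f i.+1.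
Hypothesis het : forall i, et i.+1 = (Num.sqrt (1 - a i))%:C%C *: et i
                       - (Num.sqrt (a i))%:C%C *: f i.+1.

Let hf' i j : ip (f i) (f j) = (i == j)%:R := hf i j.

Local Notation S i := ((Num.sqrt (a i))%:C%C : R[i]).
Local Notation Cc i := ((Num.sqrt (1 - a i))%:C%C : R[i]).

Lemma hSC i : S i * S i + Cc i * Cc i = 1.
Proof.
have /andP[h0 h1] := ha i.
rewrite -!rmorphM -rmorphD -!expr2 !sqr_sqrtr ?subr_ge0 //.
by rewrite addrC subrK.
Qed.

Lemma VI1 n : et n = S n *: e n + Cc n *: et n.+1.
Proof.
rewrite he het !scalerDr !scalerN !scalerA (mulrC (Cc n) (S n)).
by rewrite addrACA subrr addr0 -scalerDl hSC scale1r.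
Qed.

Lemma VI2 n : f n.+1 = Cc n *: e n - S n *: et n.+1.
Proof.
rewrite he het !scalerDr !scalerN !scalerA (mulrC (Cc n) (S n)) opprD opprK.
by rewrite addrACA subrr add0r -scalerDl addrC hSC scale1r.
Qed.

Lemma F1 n m : (n < m)%N -> ip (et n) (f m) = 0.
Proof.
elim: n m => [|n IH] m hm; first by rewrite het0 hf'; case: m hm.
rewrite het (ipBl hip) !(ipZl hip) IH ?(ltnW hm) // hf' (ltn_eqF hm).
by rewrite !mulr0 subrr.
Qed.

Lemma F2 n : ip (et n) (et n) = 1.
Proof.
elim: n => [|n IH]; first by rewrite het0 hf' eqxx.
rewrite het (ipBl hip) !(ipBr hip) !(ipZl hip) !(ipZr hip) IH (F1 (ltnSn n)).
rewrite (ip_sym0 hip (F1 (ltnSn n))) hf' eqxx.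
by rewrite !mulr0 !mulr1 subr0 sub0r opprK addrC hSC.
Qed.

Lemma F3 k m : (k.+1 < m)%N -> ip (e k) (f m) = 0.
Proof.
move=> hm; rewrite he (ipDl hip) !(ipZl hip) F1 ?(ltnW hm) // hf' (ltn_eqF hm).
by rewrite !mulr0 addr0.
Qed.

Lemma ip_e_et k : ip (e k) (et k) = S k.
Proof.
by rewrite he (ipDl hip) !(ipZl hip) F2 (ip_sym0 hip (F1 (ltnSn k))) mulr0 mulr1 addr0.
Qed.

Lemma ip_e_f k : ip (e k) (f k.+1) = Cc k.
Proof.
by rewrite he (ipDl hip) !(ipZl hip) (F1 (ltnSn k)) hf' eqxx mulr0 mulr1 add0r.
Qed.

Lemma F4 k j : ip (e k) (et (k + j).+1) = 0.
Proof.
elim: j => [|j IH].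
  by rewrite addn0 het (ipBr hip) !(ipZr hip) ip_e_et ip_e_f mulrC subrr.
rewrite addnS het (ipBr hip) !(ipZr hip) IH F3; first by rewrite !mulr0 subrr.
by rewrite !ltnS leq_addr.
Qed.

Lemma F5 k : ip (e k) (e k) = 1.
Proof.
rewrite [in X in ip _ X]he (ipDr hip (S k *: et k)).
by rewrite !(ipZr hip) ip_e_et ip_e_f hSC.
Qed.

Lemma F6 k j : (k < j)%N -> ip (e k) (e j) = 0.
Proof.
move=> hkj; have -> : j = (k + (j - k.+1)).+1 by rewrite -addSn subnKC.
rewrite [in X in ip _ X]he (ipDr hip (S _ *: et _)) !(ipZr hip) F4 F3 ?mulr0 ?addr0 //.
by rewrite ltnS -addSn leq_addr.
Qed.

Lemma e_orth : orthonormal_family ip e.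
Proof.
move=> i j; case: (ltngtP i j) => h.
- by rewrite F6.
- by rewrite (ip_sym0 hip (F6 h)).
- by rewrite h F5.
Qed.

Lemma G1 n : exists y d, lin_span e y /\ f n = y + d *: et n.+1.
Proof.
case: n => [|m].
  by exists (S 0%N *: e 0%N), (Cc 0%N); split;
    [apply: lin_spanZ; apply: lin_span_u | rewrite -het0 -VI1].
exists (Cc m *: e m - (S m * S m.+1) *: e m.+1), (- (S m * Cc m.+1)); split.
  by apply: lin_spanB; apply: lin_spanZ; apply: lin_span_u.
by rewrite VI2 (VI1 m.+1) scalerDr !scalerA scaleNr opprD addrA.
Qed.

Lemma G2 n (c : nat -> R[i]) :
  exists y d, lin_span e y /\ \sum_(i < n) c i *: f i = y + d *: et n.
Proof.
elim: n => [|n [y [d [hy hyd]]]].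
  by exists 0, 0; split; [apply: lin_span0 | rewrite big_ord0 scale0r addr0].
have [y' [d' [hy' hyd']]] := G1 n.
exists (y + (d * S n) *: e n + c n *: y'), (d * Cc n + c n * d'); split.
  by apply: lin_spanD; [apply: lin_spanD => //; apply: lin_spanZ; apply: lin_span_u
                       | apply: lin_spanZ].
rewrite big_ord_recr /= hyd hyd' (VI1 n) !scalerDr !scalerA scalerDl.
by rewrite -!addrA [X in _ + (_ + X) = _]addrCA.
Qed.

Lemma G3 M y0 d0 x : lin_span e y0 -> x = y0 + d0 *: et M -> forall j,
  exists y, lin_span e y /\
    x = y + (d0 * (Num.sqrt (\prod_(M <= k < M + j) (1 - a k)))%:C%C) *: et (M + j).
Proof.
move=> hy0 hx; elim=> [|j [y [hy hxy]]].
  by exists y0; rewrite addn0 big_geq // sqrtr1 mulr1.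
exists (y + ((d0 * (Num.sqrt (\prod_(M <= k < M + j) (1 - a k)))%:C%C) * S (M + j)) *: e (M + j)).
split; first by apply: lin_spanD => //; apply: lin_spanZ; apply: lin_span_u.
rewrite hxy addnS big_nat_recr /= ?leq_addr // sqrtrM; last first.
  by apply: prodr_ge0 => k _; rewrite subr_ge0; case/andP: (ha k).
rewrite rmorphM mulrA (VI1 (M + j)) scalerDr !scalerA addrA.
by [].
Qed.

Lemma G0 n : lin_span f (et n).
Proof.
elim: n => [|n IH]; first by rewrite het0; apply: lin_span_u.
by rewrite het; apply: lin_spanB; apply: lin_spanZ => //; apply: lin_span_u.
Qed.

Lemma G0' n : lin_span f (e n).
Proof. by rewrite he; apply: lin_spanD; apply: lin_spanZ; [apply: G0 | apply: lin_span_u]. Qed.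

Lemma G4 : (forall n : nat,
      (fun N : nat => \prod_(n <= k < N) (1 - a k)) @ \oo --> (0 : R)) ->
  forall x, lin_span f x -> closure (lin_span e) x.
Proof.
move=> hP x [n [c hx]].
have [y0 [d0 [hy0 hx0]]] := G2 n c.
rewrite -hx in hx0.
move=> B /nbhs_ballP [eps heps hB].
have {}heps : 0 < eps := heps.
have hIm : complex.Im eps = 0 by move: heps; rewrite ltcE => /andP[/eqP -> _].
have hr : 0 < complex.Re eps by move: heps; rewrite ltcE => /andP[_].
have heps' : eps = (complex.Re eps)%:C%C by rewrite [LHS]complexE hIm mulr0 addr0.
set nd := Num.sqrt (complex.Re d0 ^+ 2 + complex.Im d0 ^+ 2).
have hnd : 0 <= nd by exact: sqrtr_ge0.
set dl := complex.Re eps / (nd + 1).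
have hdl : 0 < dl by rewrite divr_gt0 // ltr_wpDl.
have := (cvgrPdist_lt _ _).1 (hP n) (dl ^+ 2) (exprn_gt0 2 hdl).
move=> [N0 _ HN].
have hP0 : forall m, 0 <= \prod_(n <= k < m) (1 - a k).
  by move=> m; apply: prodr_ge0 => k _; rewrite subr_ge0; case/andP: (ha k).
set N := maxn N0 n.
have hPN := HN N (leq_maxl N0 n); rewrite /= sub0r normrN ger0_norm // in hPN.
have hs : Num.sqrt (\prod_(n <= k < N) (1 - a k)) < dl.
  rewrite -[X in _ < X](@ger0_norm _ dl) ?ltW // -sqrtr_sqr ltr_sqrt //.
  exact: exprn_gt0.
have hs0 := sqrtr_ge0 (\prod_(n <= k < N) (1 - a k)).
have [y [hy hxy]] := G3 hy0 hx0 (N - n).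
rewrite subnKC ?leq_maxr // in hxy.
exists y; split => //; apply: hB; rewrite -ball_normE /ball_ /=.
rewrite hxy [y + _]addrC addrK normrZ normrM (ip_norm1 hip (F2 N)) mulr1.
rewrite normc_def ger0_norm ?ler0c // heps' -rmorphM ltcR.
have h1 : nd * Num.sqrt (\prod_(n <= k < N) (1 - a k)) <= nd * dl.
  by rewrite ler_wpM2l // ltW.
have h2 : nd * dl + dl = complex.Re eps.
  rewrite -[X in _ + X]mul1r -mulrDl /dl mulrC divfK //.
  by rewrite gt_eqF // ltr_wpDl.
rewrite -/nd; lra.
Qed.

End Main.

Lemma prod_inv (R : realType) (a : nat -> R) (n : nat) :
  (forall i, 0 <= a i <= 1) -> (forall i, a i < 1) -> forall j,
  let Q := \prod_(n <= k < n + j) (1 - a k) in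
  let T := \sum_(n <= k < n + j) a k / (1 - a k) in
  [/\ 0 <= Q, Q <= 1 & Q * (1 + T) <= 1].
Proof.
move=> ha ha1; elim=> [|j [h0 h1 h2]].
  by rewrite /= addn0 !big_geq // add0r mulr1.
rewrite /= addnS !big_nat_recr /= ?leq_addr //.
set Q := \prod_(n <= k < n + j) (1 - a k) in h0 h1 h2 *.
set T := \sum_(n <= k < n + j) a k / (1 - a k) in h2 *.
have /andP[a0 a1] := ha (n + j).
have hpos : 0 < 1 - a (n + j) by rewrite subr_gt0.
have hb : (1 - a (n + j)) * (a (n + j) / (1 - a (n + j))) = a (n + j).
  by rewrite mulrC divfK // gt_eqF.
set b := a (n + j) / (1 - a (n + j)) in hb *.
set c := a (n + j) in a0 a1 hpos hb *.
have e1 : Q * (1 - c) * (1 + (T + b)) = (1 - c) * (Q * (1 + T)) + Q * ((1 - c) * b).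
  by ring.
split.
- by apply: mulr_ge0 => //; exact: ltW.
- nra.
- rewrite e1 hb; nra.
Qed.

Lemma prod_to0 (R : realType) (a : nat -> R) :
  (forall i, 0 <= a i <= 1) -> (forall i, a i < 1) ->
  (fun N : nat => \sum_(0 <= k < N) a k / (1 - a k)) @ \oo --> +oo ->
  forall n : nat, (fun N : nat => \prod_(n <= k < N) (1 - a k)) @ \oo --> (0 : R).
Proof.
move=> ha ha1 hS n; apply/cvgrPdist_lt => eps heps.
have := (cvgryPge _).1 hS (eps^-1 + \sum_(0 <= k < n) a k / (1 - a k)).
move=> [N1 _ HN1].
exists (maxn N1 n) => // N /= hN.
have hN1 : (N1 <= N)%N by apply: leq_trans hN; exact: leq_maxl.
have hnN : (n <= N)%N by apply: leq_trans hN; exact: leq_maxr.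
have := HN1 N hN1; rewrite /= (@big_cat_nat _ _ _ n 0 N _ _ (leq0n n) hnN) /= => hT.
have [h0 h1 h2] := prod_inv n ha ha1 (N - n).
rewrite subnKC // in h0 h1 h2.
set Q := \prod_(n <= k < N) (1 - a k) in h0 h1 h2 *.
set T := \sum_(n <= k < N) a k / (1 - a k) in h2 hT *.
set T0 := \sum_(0 <= k < n) a k / (1 - a k) in hT.
rewrite sub0r normrN ger0_norm //.
have hinv : eps * eps^-1 = 1 by rewrite mulfV // gt_eqF.
have hinvp : 0 < eps^-1 by rewrite invr_gt0.
have hT' : eps^-1 <= T by lra.
nra.
Qed.
Unset Implicit Arguments.
Set Strict Implicit.

Theorem lemma3p1 (R : realType) (V : completeNormedModType R[i])
    (ip : V -> V -> R[i]) (f : nat -> V) (a : nat -> R) (e et : nat -> V) :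
  inner_product ip ->
  orthonormal_family ip f ->
  (forall i, 0 <= a i <= 1) ->
  et 0%N = f 0%N ->
  (forall i, e i = (Num.sqrt (a i))%:C%C *: et i
                   + (Num.sqrt (1 - a i))%:C%C *: f i.+1) ->
  (forall i, et i.+1 = (Num.sqrt (1 - a i))%:C%C *: et i
                       - (Num.sqrt (a i))%:C%C *: f i.+1) ->
  ((forall n : nat,
      (fun N : nat => \prod_(n <= k < N) (1 - a k)) @ \oo --> (0 : R)) ->
     is_ONB_of ip e (closed_span f) /\ (forall k, lin_span f (e k)))
  /\
  ((forall i, a i < 1) ->
   (fun N : nat => \sum_(0 <= k < N) a k / (1 - a k)) @ \oo --> +oo ->
     is_ONB_of ip e (closed_span f)).
Proof.
move=> hip hf ha het0 he het.
have hfirst : (forall n : nat,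
      (fun N : nat => \prod_(n <= k < N) (1 - a k)) @ \oo --> (0 : R)) ->
     is_ONB_of ip e (closed_span f) /\ (forall k, lin_span f (e k)).
  move=> hP; split; [split|].
  - exact: (e_orth hip hf ha het0 he het).
  - rewrite /closed_span; apply/seteqP; split.
      apply: closure_subset => x; apply: lin_span_sub => k.
      exact: (G0' het0 he het).
    move=> x hx.
    have : closure (closure (lin_span e)) x.
      by apply: (closure_subset (G4 hip hf ha het0 he het hP)).
    by rewrite -(closure_id _).1 //; exact: closed_closure.
  - move=> k; exact: (G0' het0 he het).
split => // ha1 hS; exact: (hfirst (prod_to0 ha ha1 hS)).1.
Qed.
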